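(* Let $k$ be the squared exponential kernel on $\mathcal{D}\subset\mathbb{R}^d$. Let $X\subset\mathcal{D}$ be a finite set and $X^{\mathrm s}\subset X$. For any finite $X^{\mathrm a}\subset\mathcal{D}$, let $K$ and $\tilde K$ be the kernel matrices on $X$ and on $X\cup X^{\mathrm a}$ respectively, let $U$ be the Nyström approximation of $K$ based on $X^{\mathrm s}$, and $\tilde U$ the Nyström approximation of $\tilde K$ based on $X^{\mathrm s}\cup X^{\mathrm a}$. Then $$\mathrm{tr}(\tilde K-\tilde U)\le\mathrm{tr}(K-U).$$
   Context: For a dataset $X=\{x_1,\dots,x_N\}$ with kernel matrix $K_{XX}=[k(x_i,x_j)]_{i,j}$ and $S=\{x_{s_1},\dots,x_{s_M}\}\subset X$, the Nyström approximation of $K_{XX}$ based on $S$ is $U_{XX}=K_{XS}K_{SS}^\dagger K_{SX}$, where $K_{XS}=[k(x_i,x_{s_j})]_{i,j}$, $K_{SS}=[k(x_{s_i},x_{s_j})]_{i,j}$ and $\dagger$ denotes the pseudoinverse. *)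

(* Defs.v *)
From HB Require Import structures.
From Stdlib Require Import ClassicalEpsilon.
From mathcomp Require Import all_boot all_order all_algebra.
From mathcomp Require Import finmap.
From mathcomp Require Import mathcomp_extra boolp reals.
From mathcomp Require Import sequences exp.
Set Implicit Arguments. Unset Strict Implicit. Unset Printing Implicit Defensive.
Import Order.TTheory GRing.Theory Num.Theory.
Local Open Scope ring_scope.

Definition sqdist (R : realType) (d : nat) (x y : 'rV[R]_d) : R :=
  \sum_(i < d) (x 0 i - y 0 i) ^+ 2.

Definition se_kernel (R : realType) (d : nat) (sf2 l : R) (x y : 'rV[R]_d) : R :=
  sf2 * expR (- (sqdist x y / (2 * l ^+ 2))).

(* Moore-Penrose conditions and the Moore-Penrose pseudoinverse
   (chosen by classical description; it exists and is unique over the reals). *)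
Definition penrose (R : realType) (m n : nat) (A : 'M[R]_(m, n)) (P : 'M[R]_(n, m)) :=
  [/\ A *m P *m A = A, P *m A *m P = P, (A *m P)^T = A *m P & (P *m A)^T = P *m A].

Definition pinv (R : realType) (m n : nat) (A : 'M[R]_(m, n)) : 'M[R]_(n, m) :=
  epsilon (inhabits 0) (penrose A).

Definition kmat (R : realType) (d : nat) (k : 'rV[R]_d -> 'rV[R]_d -> R)
  (A B : seq 'rV[R]_d) : 'M[R]_(size A, size B) :=
  \matrix_(i < size A, j < size B) k (nth 0 A i) (nth 0 B j).

Definition nystrom (R : realType) (d : nat) (k : 'rV[R]_d -> 'rV[R]_d -> R)
  (X S : seq 'rV[R]_d) : 'M[R]_(size X) :=
  kmat k X S *m pinv (kmat k S S) *m kmat k S X.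

(* Main.v *)
Require Import Defs.
From HB Require Import structures.
From mathcomp Require Import all_boot all_order all_algebra.
From mathcomp Require Import finmap.
From mathcomp Require Import mathcomp_extra boolp reals.
From mathcomp Require Import sequences exp.
From mathcomp Require Import ring lra.
From Stdlib Require Import ClassicalEpsilon.
Import Order.TTheory GRing.Theory Num.Theory.
Local Open Scope ring_scope.

Module Helpers.
From mathcomp Require Import all_classical all_reals all_analysis.
Import Order.TTheory GRing.Theory Num.Theory.
Local Open Scope classical_set_scope.
Local Open Scope ring_scope.

Section PSD.
Variable R : realType.

Lemma gram_psd (I F : finType) (v : I -> R) (A : I -> F -> R) :
  0 <= \sum_i \sum_j v i * v j * \sum_f A i f * A j f.
Proof.
have -> : \sum_i \sum_j v i * v j * \sum_f A i f * A j f =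
   \sum_f (\sum_i v i * A i f) ^+ 2.
  rewrite [RHS](eq_bigr (fun f => \sum_i \sum_j (v i * A i f) * (v j * A j f))); last first.
    by move=> f _; rewrite expr2 mulr_suml; apply: eq_bigr => i _; rewrite mulr_sumr.
  rewrite [RHS]exchange_big; apply: eq_bigr => i _.
  rewrite [RHS]exchange_big; apply: eq_bigr => j _.
  rewrite mulr_sumr; apply: eq_bigr => f _; ring.
by apply: sumr_ge0 => f _; apply: sqr_ge0.
Qed.

Lemma pow_psd (I : finType) d m (v : I -> R) (y : I -> 'I_d -> R) :
  0 <= \sum_i \sum_j v i * v j * (\sum_k y i k * y j k) ^+ m.
Proof.
have H i j : (\sum_k y i k * y j k) ^+ m =
  \sum_(f : {ffun 'I_m -> 'I_d}) (\prod_t y i (f t)) * (\prod_t y j (f t)).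
  rewrite -[m in LHS]card_ord -prodr_const bigA_distr_bigA /=.
  by apply: eq_bigr => f _; rewrite -big_split.
under eq_bigr do under eq_bigr do rewrite H.
exact: gram_psd.
Qed.

Lemma exp_psd (I : finType) d (v : I -> R) (y : I -> 'I_d -> R) :
  0 <= \sum_i \sum_j v i * v j * expR (\sum_k y i k * y j k).
Proof.
set a := fun i j => \sum_k y i k * y j k.
pose s N := \sum_i \sum_j v i * v j * series (exp_coeff (a i j)) N.
have cv : s @ \oo --> \sum_i \sum_j v i * v j * expR (a i j).
  apply: cvg_big => //; first exact: add_continuous.
  move=> i _; apply: cvg_big => //; first exact: add_continuous.
  move=> j _; apply: cvgMr; exact: is_cvg_series_exp_coeff.
rewrite -(cvg_lim _ cv) //; apply: limr_ge; first exact: cvgP cv.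
near=> N; rewrite /s.
have -> : \sum_i \sum_j v i * v j * series (exp_coeff (a i j)) N =
   \sum_(0 <= m < N) (m`!%:R)^-1 * \sum_i \sum_j v i * v j * (a i j) ^+ m.
  under eq_bigr do under eq_bigr do rewrite /series /= big_distrr /=.
  under eq_bigr do rewrite exchange_big /=.
  rewrite exchange_big /=; apply: eq_bigr => m _.
  rewrite mulr_sumr; apply: eq_bigr => i _; rewrite mulr_sumr; apply: eq_bigr => j _.
  rewrite /exp_coeff /=; ring.
apply: sumr_ge0 => m _; apply: mulr_ge0; first by rewrite invr_ge0.
exact: pow_psd.
Unshelve. all: by end_near.
Qed.
End PSD.

Section SE.
Variable R : realType.

Lemma se_split d (sf2 l : R) (x y : 'rV[R]_d) : l != 0 ->
  se_kernel sf2 l x y = sf2 * (expR (- (\sum_k x 0 k ^+ 2) / (2 * l ^+ 2)) *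
     expR (- (\sum_k y 0 k ^+ 2) / (2 * l ^+ 2)) *
     expR (\sum_k (x 0 k / l) * (y 0 k / l))).
Proof.
move=> l0; rewrite /se_kernel -!expRD; congr (_ * expR _).
have -> : sqdist x y = \sum_k x 0 k ^+ 2 + \sum_k y 0 k ^+ 2 - 2 * \sum_k x 0 k * y 0 k.
  rewrite /sqdist mulr_sumr -big_split -sumrB; apply: eq_bigr => k _ /=. set a := x 0 k. set b := y 0 k. ring.
have -> : \sum_k (x 0 k / l) * (y 0 k / l) = (\sum_k x 0 k * y 0 k) / l ^+ 2.
  rewrite mulr_suml; apply: eq_bigr => k _; field; exact: l0.
field; exact: l0.
Qed.

Lemma se_psd d (sf2 l : R) (I : finType) (p : I -> 'rV[R]_d) (u : I -> R) :
  0 <= sf2 -> l != 0 ->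
  0 <= \sum_i \sum_j u i * u j * se_kernel sf2 l (p i) (p j).
Proof.
move=> s0 l0.
pose e i := expR (- (\sum_k p i 0 k ^+ 2) / (2 * l ^+ 2)).
have -> : \sum_i \sum_j u i * u j * se_kernel sf2 l (p i) (p j) =
   sf2 * \sum_i \sum_j (u i * e i) * (u j * e j) *
     expR (\sum_k (p i 0 k / l) * (p j 0 k / l)).
  rewrite mulr_sumr; apply: eq_bigr => i _; rewrite mulr_sumr; apply: eq_bigr => j _.
  rewrite se_split //; rewrite /e; ring.
apply: mulr_ge0 => //; exact: (@exp_psd R I d (fun i => u i * e i) (fun i k => p i 0 k / l)).
Qed.
End SE.

End Helpers.

Section Pinv.
Variable R : realType.

Lemma sqnorm0 n (w : 'rV[R]_n) : w *m w^T = 0 -> w = 0.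
Proof.
move=> /matrixP /(_ 0 0); rewrite !mxE => /eqP.
rewrite psumr_eq0 => [/allP H|j _]; last by rewrite mxE -expr2 sqr_ge0.
apply/matrixP => i j; rewrite ord1 !mxE.
have := H j (mem_index_enum _); rewrite mxE -expr2 sqrf_eq0 => /eqP ->//.
Qed.

Lemma penrose_fact m r n (F : 'M[R]_(m, r)) (G : 'M[R]_(r, n)) :
  row_full F -> row_free G -> exists P, penrose (F *m G) P.
Proof.
move=> /row_fullP [B BF] /row_freeP [C GC].
have uF : F^T *m F \in unitmx.
  rewrite -row_free_unit; apply: inj_row_free => v Hv.
  have : (v *m F^T) *m (v *m F^T)^T = 0.
    by rewrite trmx_mul trmxK mulmxA -(mulmxA v) Hv mul0mx.
  move/sqnorm0 => H.
  by rewrite -[v]mulmx1 -trmx1 -BF trmx_mul mulmxA H mul0mx.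
have uG : G *m G^T \in unitmx.
  rewrite -row_free_unit; apply: inj_row_free => v Hv.
  have : (v *m G) *m (v *m G)^T = 0.
    by rewrite trmx_mul mulmxA -(mulmxA v) Hv mul0mx.
  move/sqnorm0 => H.
  by rewrite -[v]mulmx1 -GC mulmxA H mul0mx.
set a := invmx (G *m G^T); set b := invmx (F^T *m F).
have aT : a^T = a by rewrite /a trmx_inv trmx_mul trmxK.
have bT : b^T = b by rewrite /b trmx_inv trmx_mul trmxK.
exists (G^T *m (a *m (b *m F^T))).
have AP : F *m G *m (G^T *m (a *m (b *m F^T))) = F *m (b *m F^T).
  by rewrite -mulmxA (mulmxA G) (mulmxA (G *m G^T)) mulmxV // mul1mx.
have PA : G^T *m (a *m (b *m F^T)) *m (F *m G) = G^T *m (a *m G).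
  by rewrite -!mulmxA (mulmxA F^T) (mulmxA b) mulVmx // mul1mx.
split.
- by rewrite AP -!mulmxA (mulmxA F^T) (mulmxA b) mulVmx // mul1mx.
- by rewrite PA -!mulmxA (mulmxA G) (mulmxA (G *m G^T)) mulmxV // mul1mx.
- by rewrite AP !trmx_mul trmxK bT mulmxA.
- by rewrite PA !trmx_mul trmxK aT mulmxA.
Qed.

Lemma pinvP m n (A : 'M[R]_(m, n)) : penrose A (pinv A).
Proof.
rewrite /pinv; apply: epsilon_spec.
rewrite -(mulmx_base A); apply: penrose_fact; [exact: (@col_base_full R) | exact: (@row_base_free R)].
Qed.
End Pinv.

Section Resid.
Variable R : realType.
Variable d : nat.
Variable k : 'rV[R]_d -> 'rV[R]_d -> R.
Hypothesis ksym : forall x y, k x y = k y x.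
Hypothesis kpsd : forall (n : nat) (p : 'I_n -> 'rV[R]_d) (u : 'I_n -> R),
  0 <= \sum_i \sum_j u i * u j * k (p i) (p j).

Definition bvec (S : seq 'rV[R]_d) x : 'rV[R]_(size S) := \row_j k x (nth 0 S j).
Definition resid S x :=
  k x x - (bvec S x *m pinv (kmat k S S) *m (bvec S x)^T) 0 0.
Definition quad S x (w : 'rV[R]_(size S)) :=
  k x x - 2 * (bvec S x *m w^T) 0 0 + (w *m kmat k S S *m w^T) 0 0.

Lemma KS_sym S : (kmat k S S)^T = kmat k S S.
Proof. by apply/matrixP => i j; rewrite !mxE ksym. Qed.

Lemma qform n (w v : 'rV[R]_n) (M : 'M[R]_n) :
  (w *m M *m v^T) 0 0 = \sum_i \sum_j w 0 i * v 0 j * M i j.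
Proof.
rewrite !mxE; under eq_bigr do rewrite !mxE big_distrl /=.
rewrite exchange_big /=; apply: eq_bigr => i _; apply: eq_bigr => j _; ring.
Qed.

Lemma lform n (w v : 'rV[R]_n) : (w *m v^T) 0 0 = \sum_i w 0 i * v 0 i.
Proof. by rewrite !mxE; apply: eq_bigr => i _; rewrite mxE. Qed.

Lemma psdM S (w : 'rV[R]_(size S)) : 0 <= (w *m kmat k S S *m w^T) 0 0.
Proof.
rewrite qform; have := kpsd _ (fun i => nth 0 S i) (fun i => w 0 i).
congr (_ <= _); apply: eq_bigr => i _; apply: eq_bigr => j _; by rewrite mxE.
Qed.

Lemma sum_border n (f : 'I_n.+1 -> 'I_n.+1 -> R) :
  \sum_i \sum_j f i j = f ord0 ord0 + \sum_j f ord0 (lift ord0 j)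
    + \sum_i f (lift ord0 i) ord0 + \sum_i \sum_j f (lift ord0 i) (lift ord0 j).
Proof.
rewrite big_ord_recl big_ord_recl -!addrA; congr (_ + (_ + _)).
under eq_bigr do rewrite big_ord_recl.
by rewrite big_split.
Qed.

Lemma bordered S x (t : R) (w : 'rV[R]_(size S)) :
  0 <= t ^+ 2 * k x x + 2 * t * (bvec S x *m w^T) 0 0
       + (w *m kmat k S S *m w^T) 0 0.
Proof.
pose p (i : 'I_(size S).+1) := if unlift ord0 i is Some j then nth 0 S j else x.
pose u (i : 'I_(size S).+1) := if unlift ord0 i is Some j then w 0 j else t.
have p0 : p ord0 = x by rewrite /p unlift_none.
have u0 : u ord0 = t by rewrite /u unlift_none.
have pl j : p (lift ord0 j) = nth 0 S j by rewrite /p liftK.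
have ul j : u (lift ord0 j) = w 0 j by rewrite /u liftK.
have H := kpsd _ p u; rewrite sum_border in H.
set D := \sum_i w 0 i * k x (nth 0 S i).
have E1 : \sum_j u ord0 * u (lift ord0 j) * k (p ord0) (p (lift ord0 j)) = t * D.
  by rewrite /D mulr_sumr; apply: eq_bigr => j _; rewrite pl ul p0 u0; ring.
have E2 : \sum_j u (lift ord0 j) * u ord0 * k (p (lift ord0 j)) (p ord0) = t * D.
  by rewrite /D mulr_sumr; apply: eq_bigr => j _; rewrite pl ul p0 u0 ksym; ring.
have E3 : \sum_i \sum_j u (lift ord0 i) * u (lift ord0 j) * k (p (lift ord0 i)) (p (lift ord0 j))
   = (w *m kmat k S S *m w^T) 0 0.
  rewrite qform; apply: eq_bigr => i _; apply: eq_bigr => j _.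
  by rewrite !pl !ul mxE.
have E4 : (bvec S x *m w^T) 0 0 = D.
  by rewrite lform /D; apply: eq_bigr => i _; rewrite mxE mulrC.
rewrite E1 E2 E3 p0 u0 in H; rewrite E4.
apply: le_trans H _; rewrite le_eqVlt; apply/orP; left; apply/eqP; ring.
Qed.
Lemma orth S x (v : 'rV[R]_(size S)) :
  v *m kmat k S S = 0 -> (bvec S x *m v^T) 0 0 = 0.
Proof.
move=> Hv; set beta := (bvec S x *m v^T) 0 0.
apply/eqP; apply/negP => /negP nb.
pose s := - (k x x + 1) / (2 * beta).
have := bordered S x 1 (s *: v).
have e0 : (0 : 'M[R]_1) 0 0 = 0 by rewrite mxE.
have eZ : (bvec S x *m (s *: v)^T) 0 0 = s * beta.
  by rewrite /beta !lform mulr_sumr; apply: eq_bigr => i _; rewrite !mxE; ring.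
rewrite -scalemxAl Hv scaler0 mul0mx e0 addr0 eZ expr1n mul1r mulr1.
have -> : k x x + 2 * (s * beta) = -1.
  rewrite /s; field; exact: nb.
by rewrite lerNr oppr0 ler10.
Qed.

Lemma range S x : exists z : 'rV[R]_(size S), bvec S x = z *m kmat k S S.
Proof.
set M := kmat k S S; set N := kermx M.
have bN : bvec S x *m N^T = 0.
  apply/matrixP => i j; rewrite ord1 [RHS]mxE.
  have := orth S x (row j N); rewrite -row_mul mulmx_ker row0 => /(_ erefl) <-.
  by rewrite !mxE; apply: eq_bigr => l _; rewrite !mxE.
have MN : M *m N^T = 0.
  by rewrite -{1}[M]trmxK -trmx_mul KS_sym mulmx_ker trmx0.
have sM : (M <= kermx N^T)%MS by apply/sub_kermxP.
have rk : \rank (kermx N^T) = \rank M.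
  rewrite mxrank_ker mxrank_tr mxrank_ker subKn //; exact: rank_leq_row.
have sK : (kermx N^T <= M)%MS.
  by rewrite -(mxrank_leqif_sup sM).2 rk.
have : (bvec S x <= M)%MS.
  by apply: submx_trans sK; apply/sub_kermxP.
by case/submxP => D ->; exists D.
Qed.

Lemma resid_quad S x z : bvec S x = z *m kmat k S S -> resid S x = quad S x z.
Proof.
move=> bz; rewrite /resid /quad bz trmx_mul KS_sym.
have [H1 _ _ _] := @pinvP R _ _ (kmat k S S).
rewrite mulmxA -(mulmxA (z *m kmat k S S)) -(mulmxA z) (mulmxA (kmat k S S)) H1.
set a := (_ *m _ *m _) 0 0; ring.
Qed.

Lemma bil_sym S (z w : 'rV[R]_(size S)) :
  (z *m kmat k S S *m w^T) 0 0 = (w *m kmat k S S *m z^T) 0 0.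
Proof.
rewrite !qform exchange_big /=; apply: eq_bigr => i _; apply: eq_bigr => j _.
by rewrite !mxE ksym; congr (_ * _); exact: mulrC.
Qed.

Lemma resid_le S x w : resid S x <= quad S x w.
Proof.
have [z bz] := range S x.
rewrite (resid_quad _ _ _ bz) /quad bz.
have entB (A B : 'M[R]_1) : (A - B) 0 0 = A 0 0 - B 0 0 by rewrite !mxE.
have := psdM _ (z - w).
rewrite [(z - w)^T]linearB /= mulmxBl mulmxBl !mulmxBr !entB.
rewrite (bil_sym _ w z).
set a := (z *m _ *m z^T) 0 0; set b := (z *m _ *m w^T) 0 0; set c := (w *m _ *m w^T) 0 0.
move=> H; lra.
Qed.
Definition quadg (L : seq 'rV[R]_d) x (g : 'rV[R]_d -> R) :=
  k x x - 2 * \sum_(y <- L) g y * k x y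
   + \sum_(y <- L) g y * \sum_(y' <- L) g y' * k y y'.

Lemma sum_seq_ord (L : seq 'rV[R]_d) (F : 'rV[R]_d -> R) :
  \sum_(i < size L) F (nth 0 L i) = \sum_(y <- L) F y.
Proof. by rewrite (big_nth 0) big_mkord. Qed.

Lemma quad_g L x g : quad L x (\row_j g (nth 0 L j)) = quadg L x g.
Proof.
rewrite /quad /quadg lform qform.
congr (_ - 2 * _ + _).
  rewrite -sum_seq_ord; apply: eq_bigr => i _; rewrite !mxE mulrC.
  done.
rewrite -sum_seq_ord; apply: eq_bigr => i _.
rewrite -sum_seq_ord mulr_sumr; apply: eq_bigr => j _; rewrite !mxE; ring.
Qed.

Lemma sum_sub (L L' : seq 'rV[R]_d) (h : 'rV[R]_d -> R) :
  uniq L -> uniq L' -> {subset L <= L'} -> (forall y, y \notin L -> h y = 0) ->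
  \sum_(y <- L') h y = \sum_(y <- L) h y.
Proof.
move=> uL uL' sLL' h0.
have pe : perm_eq L' (L ++ [seq y <- L' | y \notin L]).
  apply: uniq_perm => //.
    rewrite cat_uniq uL filter_uniq // andbT; apply/hasPn => y.
    by rewrite mem_filter => /andP[].
  move=> y; rewrite mem_cat mem_filter.
  by case: (boolP (y \in L)) => [/sLL' -> | _] //=; rewrite orbF.
rewrite (perm_big _ pe) big_cat /= [X in _ + X]big1_seq ?addr0 // => y /andP[_].
by rewrite mem_filter => /andP[/h0].
Qed.

Lemma quad_sub S S' x (z : 'rV[R]_(size S)) :
  uniq S -> uniq S' -> {subset S <= S'} ->
  exists w : 'rV[R]_(size S'), quad S' x w = quad S x z.
Proof.
move=> uS uS' sSS'.
pose g y := \sum_(j < size S | nth 0 S j == y) z 0 j.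
have gS (i : 'I_(size S)) : g (nth 0 S i) = z 0 i.
  rewrite /g (eq_bigl (pred1 i)) ?big_pred1_eq // => j /=.
  by rewrite nth_uniq.
have g0 y : y \notin S -> g y = 0.
  move=> yS; rewrite /g big1 // => j /eqP Hj; move: yS; rewrite -Hj mem_nth //.
have zE : \row_j g (nth 0 S j) = z by apply/matrixP => i j; rewrite ord1 mxE gS.
exists (\row_j g (nth 0 S' j)); rewrite quad_g -zE quad_g /quadg.
congr (_ - 2 * _ + _).
  by apply: sum_sub => // y /g0 ->; rewrite mul0r.
rewrite (eq_bigr (fun y => g y * \sum_(y' <- S) g y' * k y y')); last first.
  by move=> y _; rewrite (sum_sub S S') // => y' /g0 ->; rewrite mul0r.
by apply: sum_sub => // y /g0 ->; rewrite mul0r.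
Qed.

Lemma sum_ind (L : seq 'rV[R]_d) x (F : 'rV[R]_d -> R) : uniq L -> x \in L ->
  \sum_(y <- L) (y == x)%:R * F y = F x.
Proof.
move=> uL xL; rewrite (bigD1_seq x) //= eqxx mul1r big1 ?addr0 //.
by move=> y /negbTE ->; rewrite mul0r.
Qed.

Lemma quad_mem S x : uniq S -> x \in S -> exists w, quad S x w = 0.
Proof.
move=> uS xS; exists (\row_j (nth 0 S j == x)%:R); rewrite (quad_g S x (fun y => (y == x)%:R)) /quadg /=.
have I1 y : \sum_(y' <- S) (y' == x)%:R * k y y' = k y x := sum_ind S x (k y) uS xS.
rewrite [X in _ + X](eq_bigr (fun y => (y == x)%:R * k y x)); last by move=> y _; rewrite -I1.
have I2 : \sum_(y <- S) (y == x)%:R * k y x = k x x := sum_ind S x (fun y => k y x) uS xS.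
have I3 : \sum_(y <- S) (y == x)%:R * k x y = k x x := sum_ind S x (k x) uS xS.
rewrite (_ : \sum_(y <- S) _ * k x y = k x x); last exact: I3.
rewrite (_ : \sum_(i <- S) _ * k i x = k x x); last exact: I2.
ring.
Qed.

Lemma resid_mono S S' x : uniq S -> uniq S' -> {subset S <= S'} ->
  resid S' x <= resid S x.
Proof.
move=> uS uS' sSS'.
have [z bz] := range S x.
rewrite (resid_quad _ _ _ bz).
have [w' <-] := quad_sub S S' x z uS uS' sSS'.
exact: resid_le.
Qed.

Lemma resid_mem S x : uniq S -> x \in S -> resid S x <= 0.
Proof.
move=> uS xS; have [w <-] := quad_mem S x uS xS; exact: resid_le.
Qed.

Lemma trace_resid (L S : seq 'rV[R]_d) :
  \tr (kmat k L L - nystrom k L S) = \sum_(y <- L) resid S y.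
Proof.
rewrite /mxtrace -sum_seq_ord; apply: eq_bigr => i _.
rewrite /resid /nystrom [in LHS]mxE [kmat k L L i i]mxE.
rewrite [in LHS]mxE; congr (_ - _).
rewrite !mxE; apply: eq_bigr => j _; rewrite !mxE; congr (_ * _).
  by apply: eq_bigr => l _; rewrite !mxE.
by rewrite ksym.
Qed.
End Resid.

Local Open Scope fset_scope.

Theorem lemma3p7 (R : realType) (d : nat) (sf2 l : R) (D : pred 'rV[R]_d)
  (X Xs Xa : {fset 'rV[R]_d}) :
  0 < sf2 -> 0 < l ->
  {subset X <= D} -> Xs `<=` X -> {subset Xa <= D} ->
  let k := se_kernel sf2 l in
  let Xt := X `|` Xa in
  let Xst := Xs `|` Xa in
  \tr (kmat k Xt Xt - nystrom k Xt Xst) <= \tr (kmat k X X - nystrom k X Xs).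
Proof.
move=> s0 l0 _ _ _; cbv zeta.
set k := se_kernel sf2 l; set Xt := X `|` Xa; set Xst := Xs `|` Xa.
have ksym : forall x y, k x y = k y x.
  move=> x y; rewrite /k /se_kernel.
  suff -> : sqdist x y = sqdist y x by [].
  by rewrite /sqdist; apply: eq_bigr => i _; rewrite -sqrrN opprB.
have kpsd : forall (n : nat) (p : 'I_n -> 'rV[R]_d) (u : 'I_n -> R),
    0 <= \sum_i \sum_j u i * u j * k (p i) (p j).
  by move=> n p u; apply: Helpers.se_psd; [exact: ltW | exact: lt0r_neq0].
rewrite (@trace_resid R d k ksym) (@trace_resid R d k ksym).
rewrite (bigID (fun y => y \in X)) /=.
have pe : perm_eq [seq y <- Xt | y \in X] X.
  apply: uniq_perm; [exact: filter_uniq (fset_uniq _) | exact: fset_uniq |].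
  by move=> y; rewrite mem_filter /Xt in_fsetU; case: (y \in X).
rewrite -big_filter (perm_big _ pe) /=.
rewrite -[X in _ <= X]addr0; apply: lerD.
  apply: ler_sum => y _; apply: (@resid_mono R d k ksym kpsd); try exact: fset_uniq.
  by move=> z zXs; rewrite /Xst in_fsetU zXs.
rewrite big_seq_cond; apply: sumr_le0 => y /andP[yXt yX].
apply: (@resid_mem R d k ksym kpsd); first exact: fset_uniq.
move: yXt; rewrite /Xt /Xst !in_fsetU (negbTE yX) /= => ->; exact: orbT.
Qed.
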